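(* For every set $S$, both $\mathbb{H}'_S$ and $\mathbb{H}_S$ are Elgot monads, where for $f\colon X\to T(Y\uplus X)$ (with $T=H'_S$, resp. $T=H_S$) the iteration $f^\dagger\colon X\to TY$ is the least fixpoint of the $\omega$-continuous endomap $g\mapsto[\eta,g]^\star\cdot f$ on the function space $X\to TY$ (ordered pointwise by $\sqsubseteq$).
   Context: Trajectories over $S$: pairs $\langle I,e\rangle$ with $e\colon I\to S$ and $I$ an interval $[0,d]$ ($d\in\mathbb{R}_{\ge0}$) or $[0,d)$ ($d\in\mathbb{R}_{\ge0}\cup\{\infty\}$). Let $H'_SX=\sum_{d\in\mathbb{R}_{\ge0}}S^{[0,d)}\times X\ \cup\ \sum_{d\in\mathbb{R}_{\ge0}\cup\{\infty\}}S^{[0,d)}$ and $H_SX=\sum_{d\in\mathbb{R}_{\ge0}}S^{[0,d)}\times X\ \cup\ \sum_{I}S^{I}$ with $I$ ranging over all intervals $[0,d]$ ($d\in\mathbb{R}_{\ge0}$) and $[0,d)$ ($d\in\mathbb{R}_{\ge0}\cup\{\infty\}$); elements are written $\langle I,e,x\rangle$ (first summand) and $\langle I,e\rangle$ (second summand). Concatenation: $\langle[0,d_1),e_1\rangle\frown\langle J,e_2\rangle=\langle J',\lambda t.\,\text{if }t<d_1\text{ then }e_1(t)\text{ else }e_2(t-d_1)\rangle$, $J'=[0,d_1+d_2)$ if $J=[0,d_2)$, $J'=[0,d_1+d_2]$ if $J=[0,d_2]$. Monad structure (for both $T=H'_S,H_S$): $\eta(x)=\langle\emptyset,!,x\rangle$;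 for $f\colon X\to TY$: $f^\star\langle I,e,x\rangle=\langle (I,e)\frown(J,e'),y\rangle$ if $f(x)=\langle J,e',y\rangle$, $f^\star\langle I,e,x\rangle=(I,e)\frown(J,e')$ if $f(x)=\langle J,e'\rangle$, $f^\star\langle I,e\rangle=\langle I,e\rangle$. These define monads $\mathbb{H}'_S,\mathbb{H}_S$. Order $\sqsubseteq$ on $TY$: $a\sqsubseteq b$ iff $a=b$, or $a=\langle I,e\rangle$ and $b\in\{\langle I',e'\rangle,\langle I',e',y\rangle\}$ with $I\subseteq I'$ and $e=e'|_I$. An Elgot monad is a monad $\mathbb{T}$ with an operator sending $f\colon X\to T(Y\uplus X)$ to $f^\dagger\colon X\to TY$ satisfying the standard Elgot iteration axioms: fixpoint $[\eta,f^\dagger]^\star\cdot f=f^\dagger$; naturality $g^\star\cdot f^\dagger=([T\mathsf{inl}\cdot g,\eta\cdot\mathsf{inr}]^\star\cdot f)^\dagger$; codiagonal $(T[\mathsf{id},\mathsf{inr}]\cdot f)^\dagger=(f^\dagger)^\dagger$ for $f\colon X\to T((Y\uplus X)\uplus X)$; uniformity: $f\cdot h=T(\mathsf{id}\uplus h)\cdot g$ implies $f^\dagger\cdot h=g^\dagger$. *)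

(* Defs.v *)
From Stdlib Require Import Reals Lra.
Open Scope R_scope.

Record nnR := mknn { nnval :> R; nnval_ge0 : 0 <= nnval }.

Definition nn0 : nnR := mknn 0 (Rle_refl 0).

Lemma nnadd_ge0 (a b : nnR) : 0 <= a + b.
Proof. destruct a as [a ha], b as [b hb]; simpl; lra. Qed.

Definition nnadd (a b : nnR) : nnR := mknn (a + b) (nnadd_ge0 a b).

Inductive ext : Type := EFin (d : nnR) | EInf.

Inductive intv : Type := ICl (d : nnR) | IOp (d : ext).

Definition inI (I : intv) (t : R) : Prop :=
  match I with
  | ICl d => 0 <= t <= d
  | IOp (EFin d) => 0 <= t < d
  | IOp EInf => 0 <= t
  end.

Definition dom (I : intv) : Type := {t : R | inI I t}.

Definition shiftE (d1 : nnR) (k : ext) : ext :=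
  match k with EFin d2 => EFin (nnadd d1 d2) | EInf => EInf end.

Definition shiftI (d1 : nnR) (J : intv) : intv :=
  match J with ICl d2 => ICl (nnadd d1 d2) | IOp k => IOp (shiftE d1 k) end.

Lemma inI_shift_ge0 d1 J t : inI (shiftI d1 J) t -> 0 <= t.
Proof. destruct J as [d2|[d2|]]; simpl; intros; lra. Qed.

Lemma inI_shift_right (d1 : nnR) J t :
  inI (shiftI d1 J) t -> ~ t < d1 -> inI J (t - d1).
Proof.
  destruct d1 as [d1 h1]; destruct J as [[d2 h2]|[[d2 h2]|]]; simpl; intros; lra.
Qed.

Definition concat_fun {S : Type} (d1 : nnR) (e1 : dom (IOp (EFin d1)) -> S)
  (J : intv) (e2 : dom J -> S) : dom (shiftI d1 J) -> S :=
  fun p =>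
    let t := proj1_sig p in
    match Rlt_dec t d1 with
    | left h => e1 (exist _ t (conj (inI_shift_ge0 d1 J t (proj2_sig p)) h))
    | right h => e2 (exist _ (t - d1) (inI_shift_right d1 J t (proj2_sig p) h))
    end.

Lemma inI_empty t : ~ inI (IOp (EFin nn0)) t.
Proof. simpl; lra. Qed.

Definition empty_fun {S : Type} : dom (IOp (EFin nn0)) -> S :=
  fun p => False_rect _ (inI_empty _ (proj2_sig p)).

Definition prefix {S : Type} (I : intv) (e : dom I -> S) (I' : intv) (e' : dom I' -> S)
  : Prop :=
  (forall t, inI I t -> inI I' t) /\
  (forall t (p : inI I t) (p' : inI I' t), e (exist _ t p) = e' (exist _ t p')).

Inductive Hp (S X : Type) : Type :=
  | HpTerm (d : nnR) (e : dom (IOp (EFin d)) -> S) (x : X)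
  | HpDiv (k : ext) (e : dom (IOp k) -> S).
Arguments HpTerm {S X}.
Arguments HpDiv {S X}.

Definition Hp_eta (S X : Type) (x : X) : Hp S X := HpTerm nn0 empty_fun x.

Definition Hp_bind (S X Y : Type) (f : X -> Hp S Y) (a : Hp S X) : Hp S Y :=
  match a with
  | HpTerm d e x =>
      match f x with
      | HpTerm d2 e2 y => HpTerm (nnadd d d2) (concat_fun d e (IOp (EFin d2)) e2) y
      | HpDiv k e2 => HpDiv (shiftE d k) (concat_fun d e (IOp k) e2)
      end
  | HpDiv k e => HpDiv k e
  end.

Definition Hp_le (S Y : Type) (a b : Hp S Y) : Prop :=
  a = b \/
  match a with
  | HpDiv k e =>
      match b with
      | HpTerm d e' _ => prefix (IOp k) e (IOp (EFin d)) e'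
      | HpDiv k' e' => prefix (IOp k) e (IOp k') e'
      end
  | HpTerm _ _ _ => False
  end.

Inductive H (S X : Type) : Type :=
  | HTerm (d : nnR) (e : dom (IOp (EFin d)) -> S) (x : X)
  | HDiv (I : intv) (e : dom I -> S).
Arguments HTerm {S X}.
Arguments HDiv {S X}.

Definition H_eta (S X : Type) (x : X) : H S X := HTerm nn0 empty_fun x.

Definition H_bind (S X Y : Type) (f : X -> H S Y) (a : H S X) : H S Y :=
  match a with
  | HTerm d e x =>
      match f x with
      | HTerm d2 e2 y => HTerm (nnadd d d2) (concat_fun d e (IOp (EFin d2)) e2) y
      | HDiv J e2 => HDiv (shiftI d J) (concat_fun d e J e2)
      end
  | HDiv I0 e => HDiv I0 e
  end.

Definition H_le (S Y : Type) (a b : H S Y) : Prop :=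
  a = b \/
  match a with
  | HDiv I0 e =>
      match b with
      | HTerm d e' _ => prefix I0 e (IOp (EFin d)) e'
      | HDiv I1 e' => prefix I0 e I1 e'
      end
  | HTerm _ _ _ => False
  end.

Definition copair {A B C : Type} (f : A -> C) (g : B -> C) (s : A + B) : C :=
  match s with inl a => f a | inr b => g b end.

Definition summap {A A' B B' : Type} (f : A -> A') (g : B -> B') (s : A + B) : A' + B' :=
  match s with inl a => inl (f a) | inr b => inr (g b) end.

Close Scope R_scope.
Section Generic.
Variable T : Type -> Type.
Variable eta : forall X, X -> T X.
Variable bind : forall X Y, (X -> T Y) -> T X -> T Y.
Variable le : forall Y, T Y -> T Y -> Prop.

Definition Tmap {A B : Type} (h : A -> B) : T A -> T B :=
  bind A B (fun a => eta B (h a)).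

Definition is_monad : Prop :=
  (forall X (a : T X), bind X X (eta X) a = a) /\
  (forall X Y (f : X -> T Y) (x : X), bind X Y f (eta X x) = f x) /\
  (forall X Y Z (f : X -> T Y) (g : Y -> T Z) (a : T X),
      bind X Z (fun x => bind Y Z g (f x)) a = bind Y Z g (bind X Y f a)).

Definition fle {X Y : Type} (g h : X -> T Y) : Prop := forall x, le Y (g x) (h x).

Definition is_chain {X Y : Type} (c : nat -> X -> T Y) : Prop :=
  forall n, fle (c n) (c (S n)).

Definition is_sup {X Y : Type} (c : nat -> X -> T Y) (g : X -> T Y) : Prop :=
  (forall n, fle (c n) g) /\ (forall h, (forall n, fle (c n) h) -> fle g h).

Definition omega_continuous {X Y : Type} (F : (X -> T Y) -> X -> T Y) : Prop :=
  (forall g h, fle g h -> fle (F g) (F h)) /\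
  (forall c g, is_chain c -> is_sup c g -> is_sup (fun n => F (c n)) (F g)).

Definition is_least_fixpoint {X Y : Type} (F : (X -> T Y) -> X -> T Y) (g : X -> T Y)
  : Prop :=
  (forall x, F g x = g x) /\ (forall h, (forall x, F h x = h x) -> fle g h).

Definition Phi {X Y : Type} (f : X -> T (Y + X)) (g : X -> T Y) : X -> T Y :=
  fun x => bind (Y + X) Y (copair (eta Y) g) (f x).

Definition elgot_axioms (dag : forall X Y, (X -> T (Y + X)) -> X -> T Y) : Prop :=
  (forall X Y (f : X -> T (Y + X)) (x : X),
      bind (Y + X) Y (copair (eta Y) (dag X Y f)) (f x) = dag X Y f x) /\
  (forall X Y Z (g : Y -> T Z) (f : X -> T (Y + X)) (x : X),
      bind Y Z g (dag X Y f x) =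
      dag X Z (fun x0 => bind (Y + X) (Z + X)
                  (copair (fun y => Tmap inl (g y)) (fun x' => eta (Z + X) (inr x')))
                  (f x0)) x) /\
  (forall X Y (f : X -> T ((Y + X) + X)) (x : X),
      dag X Y (fun x0 => Tmap (copair (fun s : Y + X => s) inr) (f x0)) x =
      dag X Y (dag X (Y + X)%type f) x) /\
  (forall X Y Z (f : X -> T (Y + X)) (g : Z -> T (Y + Z)) (h : Z -> X),
      (forall z, f (h z) = Tmap (summap (fun y : Y => y) h) (g z)) ->
      forall z, dag X Y f (h z) = dag Z Y g z).

Definition elgot_by_least_fixpoints : Prop :=
  is_monad /\
  (forall X Y (c : nat -> X -> T Y), is_chain c -> exists g, is_sup c g) /\
  (forall X Y (f : X -> T (Y + X)), omega_continuous (Phi f)) /\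
  exists dag : forall X Y, (X -> T (Y + X)) -> X -> T Y,
    (forall X Y (f : X -> T (Y + X)), is_least_fixpoint (Phi f) (dag X Y f)) /\
    elgot_axioms dag.

End Generic.

(* Main.v *)
Require Import Defs.
From Stdlib Require Import Reals Lra FunctionalExtensionality ClassicalEpsilon Classical ProofIrrelevance PeanoNat Lia.

Section Abs.
Variable T : Type -> Type.
Variable eta : forall X, X -> T X.
Variable bind : forall X Y, (X -> T Y) -> T X -> T Y.
Variable le : forall Y, T Y -> T Y -> Prop.

Definition slub {Y} (c : nat -> T Y) (s : T Y) : Prop :=
  (forall n, le Y (c n) s) /\ (forall h, (forall n, le Y (c n) h) -> le Y s h).
Definition schain {Y} (c : nat -> T Y) : Prop := forall n, le Y (c n) (c (S n)).

Hypothesis m1 : forall X (a : T X), bind X X (eta X) a = a.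
Hypothesis m2 : forall X Y (f : X -> T Y) (x : X), bind X Y f (eta X x) = f x.
Hypothesis m3 : forall X Y Z (f : X -> T Y) (g : Y -> T Z) (a : T X),
      bind X Z (fun x => bind Y Z g (f x)) a = bind Y Z g (bind X Y f a).
Hypothesis le_refl : forall Y (a : T Y), le Y a a.
Hypothesis le_trans : forall Y (a b c : T Y), le Y a b -> le Y b c -> le Y a c.
Hypothesis le_anti : forall Y (a b : T Y), le Y a b -> le Y b a -> a = b.
Variable bot : forall Y, T Y.
Hypothesis bot_le : forall Y (a : T Y), le Y (bot Y) a.
Hypothesis bind_bot : forall X Y (f : X -> T Y), bind X Y f (bot X) = bot Y.
Hypothesis lub_ex : forall Y (c : nat -> T Y), schain c -> exists s, slub c s.
Hypothesis bind_mono_r : forall X Y (f : X -> T Y) a a', le X a a' ->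
  le Y (bind X Y f a) (bind X Y f a').
Hypothesis bind_mono_l : forall X Y (f f' : X -> T Y) a, (forall x, le Y (f x) (f' x)) ->
  le Y (bind X Y f a) (bind X Y f' a).
Hypothesis bind_cont_r : forall X Y (f : X -> T Y) (c : nat -> T X) s,
  schain c -> slub c s -> slub (fun n => bind X Y f (c n)) (bind X Y f s).
Hypothesis bind_cont_l : forall X Y (k : nat -> X -> T Y) (K : X -> T Y) a,
  (forall x, schain (fun n => k n x)) -> (forall x, slub (fun n => k n x) (K x)) ->
  slub (fun n => bind X Y (k n) a) (bind X Y K a).

Lemma lub_uniq Y (c : nat -> T Y) s s' : slub c s -> slub c s' -> s = s'.
Proof. intros [H1 H2] [H3 H4]. apply le_anti; auto. Qed.

Lemma pointwise_sup X Y (c : nat -> X -> T Y) g :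
  (forall x, slub (fun n => c n x) (g x)) -> is_sup T le c g.
Proof.
  intros H. split.
  - intros n x. apply (proj1 (H x)).
  - intros h Hh x. apply (proj2 (H x)). intros n; apply Hh.
Qed.

Lemma sup_pointwise X Y (c : nat -> X -> T Y) g :
  is_sup T le c g -> forall x, slub (fun n => c n x) (g x).
Proof.
  intros [H1 H2] x. split.
  - intros n; apply H1.
  - intros b Hb.
    set (h := fun x' => if excluded_middle_informative (x' = x) then b else g x').
    assert (Hh : fle T le g h).
    { apply H2. intros n x'. unfold h. destruct (excluded_middle_informative (x' = x)).
      - subst; apply Hb.
      - apply H1. }
    specialize (Hh x). unfold h in Hh.
    destruct (excluded_middle_informative (x = x)); [exact Hh| congruence].
Qed.

Lemma sup_ex X Y (c : nat -> X -> T Y) : is_chain T le c -> exists g, is_sup T le c g.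
Proof.
  intros Hc.
  assert (H : forall x, exists s, slub (fun n => c n x) s).
  { intros x. apply lub_ex. intros n. apply Hc. }
  exists (fun x => proj1_sig (constructive_indefinite_description _ (H x))).
  apply pointwise_sup. intros x.
  exact (proj2_sig (constructive_indefinite_description _ (H x))).
Qed.

Lemma sup_uniq X Y (c : nat -> X -> T Y) g g' :
  is_sup T le c g -> is_sup T le c g' -> forall x, g x = g' x.
Proof.
  intros H H' x. eapply lub_uniq; apply sup_pointwise; eauto.
Qed.

Lemma lub_const Y (a : T Y) : slub (fun _ => a) a.
Proof. split; [intros; apply le_refl| intros h Hh; apply (Hh 0)]. Qed.

Lemma Phi_mono X Y (f : X -> T (Y + X)) g h :
  fle T le g h -> fle T le (Phi T eta bind f g) (Phi T eta bind f h).
Proof.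
  intros H x. unfold Phi. apply bind_mono_l. intros [y|x']; simpl; auto.
Qed.

Lemma Phi_cont X Y (f : X -> T (Y + X)) :
  omega_continuous T le (Phi T eta bind f).
Proof.
  split.
  - apply Phi_mono.
  - intros c g Hc Hs. apply pointwise_sup. intros x. unfold Phi.
    apply (bind_cont_l _ _ (fun n => copair (eta Y) (c n)) (copair (eta Y) g)).
    + intros [y|x'] n; simpl; auto. apply Hc.
    + intros [y|x']; simpl. apply lub_const. apply (sup_pointwise _ _ _ _ Hs).
Qed.

Fixpoint kle {X Y} (f : X -> T (Y + X)) (n : nat) : X -> T Y :=
  match n with
  | O => fun _ => bot Y
  | S n => Phi T eta bind f (kle f n)
  end.

Lemma kle_chain X Y (f : X -> T (Y + X)) : is_chain T le (kle f).
Proof.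
  intros n; induction n; simpl.
  - intros x; apply bot_le.
  - apply Phi_mono; auto.
Qed.

Definition dag X Y (f : X -> T (Y + X)) : X -> T Y :=
  proj1_sig (constructive_indefinite_description _ (sup_ex X Y (kle f) (kle_chain X Y f))).

Lemma dag_sup X Y (f : X -> T (Y + X)) : is_sup T le (kle f) (dag X Y f).
Proof.
  unfold dag. exact (proj2_sig (constructive_indefinite_description _ _)).
Qed.

Lemma dag_lub X Y (f : X -> T (Y + X)) x : slub (fun n => kle f n x) (dag X Y f x).
Proof. apply sup_pointwise, dag_sup. Qed.

Lemma lub_shift Y (c : nat -> T Y) s : schain c -> slub (fun n => c (S n)) s -> slub c s.
Proof.
  intros Hc [H1 H2]. split.
  - intros n. eapply le_trans; [apply Hc| apply H1].
  - intros h Hh. apply H2. intros n; apply Hh.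
Qed.

Lemma dag_fix X Y (f : X -> T (Y + X)) x : Phi T eta bind f (dag X Y f) x = dag X Y f x.
Proof.
  assert (H := proj2 (Phi_cont X Y f) (kle f) (dag X Y f) (kle_chain X Y f) (dag_sup X Y f)).
  apply (lub_uniq _ (fun n => kle f n x)).
  - apply lub_shift. intros n; apply kle_chain.
    apply (sup_pointwise _ _ _ _ H x).
  - apply dag_lub.
Qed.

Lemma dag_park X Y (f : X -> T (Y + X)) p :
  fle T le (Phi T eta bind f p) p -> fle T le (dag X Y f) p.
Proof.
  intros Hp. apply (proj2 (dag_sup X Y f)). intros n. induction n; simpl.
  - intros x; apply bot_le.
  - intros x. eapply le_trans; [apply Phi_mono; eauto| apply Hp].
Qed.

Lemma dag_least X Y (f : X -> T (Y + X)) :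
  is_least_fixpoint T le (Phi T eta bind f) (dag X Y f).
Proof.
  split. apply dag_fix.
  intros h Hh. apply dag_park. intros x; rewrite Hh; auto.
Qed.

Lemma fle_anti X Y (g h : X -> T Y) : fle T le g h -> fle T le h g -> forall x, g x = h x.
Proof. intros; apply le_anti; auto. Qed.

Lemma naturality X Y Z (g : Y -> T Z) (f : X -> T (Y + X)) (x : X) :
      bind Y Z g (dag X Y f x) =
      dag X Z (fun x0 => bind (Y + X) (Z + X)
                  (copair (fun y => Tmap T eta bind inl (g y)) (fun x' => eta (Z + X) (inr x')))
                  (f x0)) x.
Proof.
  set (f' := fun x0 => bind (Y + X) (Z + X)
                  (copair (fun y => Tmap T eta bind inl (g y)) (fun x' => eta (Z + X) (inr x')))
                  (f x0)).
  assert (K : forall n x, bind Y Z g (kle f n x) = kle f' n x).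
  { induction n; intros x0; simpl.
    - apply bind_bot.
    - unfold Phi, f'. rewrite <- m3, <- m3. f_equal. apply functional_extensionality.
      intros [y|x']; simpl.
      + rewrite m2. unfold Tmap. rewrite <- m3.
        transitivity (bind Z Z (eta Z) (g y)); [symmetry; apply m1|].
        f_equal. apply functional_extensionality; intros z. rewrite m2. reflexivity.
      + rewrite m2. apply IHn. }
  apply (lub_uniq _ (fun n => bind Y Z g (kle f n x))).
  - apply bind_cont_r. intros n; apply kle_chain. apply dag_lub.
  - assert (E : (fun n => bind Y Z g (kle f n x)) = (fun n => kle f' n x)).
    { apply functional_extensionality; intros n; apply K. }
    rewrite E. apply dag_lub.
Qed.

Lemma uniformity X Y Z (f : X -> T (Y + X)) (g : Z -> T (Y + Z)) (h : Z -> X) :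
      (forall z, f (h z) = Tmap T eta bind (summap (fun y : Y => y) h) (g z)) ->
      forall z, dag X Y f (h z) = dag Z Y g z.
Proof.
  intros Hf.
  assert (K : forall n z, kle f n (h z) = kle g n z).
  { induction n; intros z; simpl; auto.
    unfold Phi. rewrite Hf. unfold Tmap. rewrite <- m3. f_equal.
    apply functional_extensionality. intros [y|z']; simpl; rewrite m2; simpl; auto. }
  intros z. apply (lub_uniq _ (fun n => kle g n z)).
  - assert (E : (fun n => kle g n z) = (fun n => kle f n (h z))).
    { apply functional_extensionality; intros n; symmetry; apply K. }
    rewrite E. apply dag_lub.
  - apply dag_lub.
Qed.

Lemma codiagonal X Y (f : X -> T ((Y + X) + X)) (x : X) :
      dag X Y (fun x0 => Tmap T eta bind (copair (fun s : Y + X => s) inr) (f x0)) x =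
      dag X Y (dag X (Y + X)%type f) x.
Proof.
  set (f1 := fun x0 => Tmap T eta bind (copair (fun s : Y + X => s) inr) (f x0)).
  set (G := dag X (Y + X)%type f).
  set (F := fun (a b : X -> T Y) x0 => bind _ _ (copair (copair (eta Y) a) b) (f x0)).
  assert (E1 : forall a x0, Phi T eta bind f1 a x0 = F a a x0).
  { intros a x0. unfold Phi, f1, F, Tmap. rewrite <- m3. f_equal.
    apply functional_extensionality. intros [[y|x']|x']; simpl; rewrite m2; reflexivity. }
  set (f2 := fun (a : X -> T Y) x0 => bind (Y + X + X) (Y + X)
           (copair (fun y => Tmap T eta bind inl (copair (eta Y) a y))
              (fun x' => eta (Y + X) (inr x'))) (f x0)).
  assert (E2 : forall a x0, Phi T eta bind G a x0 = dag X Y (f2 a) x0).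
  { intros a x0. unfold Phi, G. rewrite naturality. reflexivity. }
  assert (E3 : forall a b x0, Phi T eta bind (f2 a) b x0 = F a b x0).
  { intros a b x0. unfold Phi, f2, F. rewrite <- m3. f_equal.
    apply functional_extensionality. intros [u|x']; simpl.
    - unfold Tmap. rewrite <- m3.
      transitivity (bind _ _ (eta Y) (copair (eta Y) a u)).
      + f_equal. apply functional_extensionality; intros z. rewrite m2. reflexivity.
      + apply m1.
    - rewrite m2. reflexivity. }
  change (dag X Y f1 x = dag X Y G x).
  apply le_anti; revert x.
  - apply dag_park. intros x0. rewrite E1.
    rewrite <- (dag_fix X Y G x0). rewrite E2.
    rewrite <- (dag_fix X Y (f2 (dag X Y G)) x0). rewrite E3.
    assert (Q : forall x1, dag X Y (f2 (dag X Y G)) x1 = dag X Y G x1).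
    { intros x1. rewrite <- E2. apply dag_fix. }
    assert (Q' : dag X Y (f2 (dag X Y G)) = dag X Y G).
    { apply functional_extensionality; apply Q. }
    rewrite Q'. apply le_refl.
  - apply dag_park. intros x0. rewrite E2. apply dag_park.
    intros x1. rewrite E3. rewrite <- E1. rewrite dag_fix. apply le_refl.
Qed.

Theorem abstract_elgot : elgot_by_least_fixpoints T eta bind le.
Proof.
  split; [|split; [|split]].
  - split; [exact m1| split; [exact m2| exact m3]].
  - exact sup_ex.
  - exact Phi_cont.
  - exists dag. split. apply dag_least.
    split; [|split; [|split]].
    + intros. apply dag_fix.
    + apply naturality.
    + apply codiagonal.
    + apply uniformity.
Qed.
End Abs.
Open Scope R_scope.

Lemma nn_eq (a b : nnR) : nnval a = nnval b -> a = b.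
Proof. destruct a, b; simpl; intros ->. f_equal. apply proof_irrelevance. Qed.

Lemma dom_eq {P : R -> Prop} {A : Type} (f : {t : R | P t} -> A) t t' p p' :
  t = t' -> f (exist _ t p) = f (exist _ t' p').
Proof. intros ->. f_equal. f_equal. apply proof_irrelevance. Qed.

Lemma inI_ge0 I t : inI I t -> 0 <= t.
Proof. destruct I as [d|[d|]]; simpl; lra. Qed.

Lemma inI_down I s t : inI I t -> 0 <= s <= t -> inI I s.
Proof. destruct I as [d|[d|]]; simpl; lra. Qed.

Lemma inI_ext I I' : (forall t, inI I t <-> inI I' t) -> I = I'.
Proof.
  intros Hx.
  destruct I as [[d hd]|[[d hd]|]], I' as [[d' hd']|[[d' hd']|]]; simpl in Hx.
  - assert (A := proj1 (Hx d) ltac:(lra)). assert (B := proj2 (Hx d') ltac:(lra)).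
    f_equal; apply nn_eq; simpl; lra.
  - assert (A := proj1 (Hx d) ltac:(lra)).
    assert (B := proj2 (Hx ((d + d') / 2)) ltac:(lra)). lra.
  - assert (B := proj2 (Hx (d + 1)) ltac:(lra)). lra.
  - assert (A := proj2 (Hx d') ltac:(lra)).
    assert (B := proj1 (Hx ((d + d') / 2)) ltac:(lra)). lra.
  - destruct (Rtotal_order d d') as [h|[h|h]].
    + assert (B := proj2 (Hx d) ltac:(lra)). lra.
    + subst. do 2 f_equal. apply nn_eq; simpl; lra.
    + assert (B := proj1 (Hx d') ltac:(lra)). lra.
  - assert (B := proj2 (Hx d) ltac:(lra)). lra.
  - assert (B := proj1 (Hx (d' + 1)) ltac:(lra)). lra.
  - assert (B := proj1 (Hx d') ltac:(lra)). lra.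
  - reflexivity.
Qed.

Lemma inI_shift (d : nnR) J t :
  inI (shiftI d J) t <-> 0 <= t /\ (t < d \/ inI J (t - d)).
Proof.
  destruct d as [d hd]; destruct J as [[d2 h2]|[[d2 h2]|]]; simpl; split; intros; lra.
Qed.

Lemma prefix_refl {S} I (e : dom I -> S) : prefix I e I e.
Proof. split; auto. intros; apply dom_eq; auto. Qed.

Lemma prefix_trans {S} I1 (e1 : dom I1 -> S) I2 e2 I3 e3 :
  prefix I1 e1 I2 e2 -> prefix I2 e2 I3 e3 -> prefix I1 e1 I3 e3.
Proof.
  intros [A B] [C D]. split; auto.
  intros t p p'. rewrite (B t p (A t p)). apply D.
Qed.

Lemma prefix_concat {S} (d : nnR) e J (e2 : dom J -> S) J' e2' :
  prefix J e2 J' e2' ->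
  prefix (shiftI d J) (concat_fun d e J e2) (shiftI d J') (concat_fun d e J' e2').
Proof.
  intros [A B]. split.
  - intros t. rewrite !inI_shift. intuition.
  - intros t p p'. unfold concat_fun; simpl.
    destruct (Rlt_dec t d). apply dom_eq; auto. apply B.
Qed.

Lemma prefix_concat_base {S} (d : nnR) e J (e2 : dom J -> S) :
  prefix (IOp (EFin d)) e (shiftI d J) (concat_fun d e J e2).
Proof.
  split.
  - intros t Ht. rewrite inI_shift. simpl in Ht. lra.
  - intros t p p'. unfold concat_fun; simpl.
    destruct (Rlt_dec t d). apply dom_eq; auto. exfalso; assert (Hp := p); simpl in Hp; lra.
Qed.

Lemma HDiv_eq {S X} I (e : dom I -> S) I' e' :
  (forall t, inI I t <-> inI I' t) ->
  (forall t p p', e (exist _ t p) = e' (exist _ t p')) ->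
  @HDiv S X I e = HDiv I' e'.
Proof.
  intros A B. assert (I = I') by (apply inI_ext; auto). subst.
  f_equal. apply functional_extensionality. intros [t p]. apply B.
Qed.

Lemma HTerm_eq {S X} (d : nnR) e (d' : nnR) e' (x : X) :
  nnval d = nnval d' ->
  (forall t p p', e (exist _ t p) = e' (exist _ t p')) ->
  @HTerm S X d e x = HTerm d' e' x.
Proof.
  intros A B. assert (d = d') by (apply nn_eq; auto). subst.
  f_equal. apply functional_extensionality. intros [t p]. apply B.
Qed.

Ltac addge0 := repeat match goal with H : inI ?I ?t |- _ =>
  lazymatch goal with _ : 0 <= t |- _ => fail | _ => pose proof (inI_ge0 _ _ H) end end.

Ltac addnn := repeat match goal with d : nnR |- _ =>
  lazymatch goal with _ : 0 <= nnval d |- _ => fail | _ => pose proof (nnval_ge0 d) end end.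

Ltac concat_solve :=
  intros; unfold concat_fun; simpl;
  repeat match goal with |- context [Rlt_dec ?a ?b] => destruct (Rlt_dec a b) end;
  addge0; addnn; simpl in *;
  first [ apply dom_eq; simpl; lra | exfalso; lra | exfalso; eapply inI_empty; eassumption ].

Section HS.
Variable S : Type.

Definition Idom {X} (a : H S X) : intv :=
  match a with HTerm d _ _ => IOp (EFin d) | HDiv I0 _ => I0 end.
Definition Ival {X} (a : H S X) : dom (Idom a) -> S :=
  match a as a0 return dom (Idom a0) -> S with HTerm _ e _ => e | HDiv _ e => e end.
Definition isdiv {X} (a : H S X) : Prop :=
  match a with HTerm _ _ _ => False | HDiv _ _ => True end.
Definition pre {X} (a b : H S X) : Prop := prefix (Idom a) (Ival a) (Idom b) (Ival b).

Lemma le_iff Y (a b : H S Y) : H_le S Y a b <-> a = b \/ (isdiv a /\ pre a b).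
Proof. destruct a, b; unfold H_le, pre; simpl; tauto. Qed.

Lemma le_div Y (a b : H S Y) : isdiv a -> (H_le S Y a b <-> pre a b).
Proof.
  intros D. rewrite le_iff. split.
  - intros [->|[_ P]]; auto. apply prefix_refl.
  - intros P; right; auto.
Qed.

Lemma Hle_refl Y (a : H S Y) : H_le S Y a a.
Proof. left; auto. Qed.

Lemma Hle_trans Y (a b c : H S Y) : H_le S Y a b -> H_le S Y b c -> H_le S Y a c.
Proof.
  rewrite !le_iff. intros [->|[Da Pab]]; auto.
  intros [<-|[Db Pbc]]; right; auto. split; auto. eapply prefix_trans; eauto.
Qed.

Lemma Hle_anti Y (a b : H S Y) : H_le S Y a b -> H_le S Y b a -> a = b.
Proof.
  rewrite !le_iff. intros [->|[Da Pab]]; auto.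
  intros [<-|[Db Pba]]; auto.
  destruct a as [|I e]; [contradiction|]. destruct b as [|I' e']; [contradiction|].
  destruct Pab as [A B], Pba as [C D]. simpl in *.
  apply HDiv_eq; auto. intros t; split; auto.
Qed.

Lemma term_max Y (a b : H S Y) : ~ isdiv a -> H_le S Y a b -> a = b.
Proof. rewrite le_iff. intros N [E|[D _]]; tauto. Qed.

Definition Hbot Y : H S Y := HDiv (IOp (EFin nn0)) empty_fun.

Lemma Hbot_le Y (a : H S Y) : H_le S Y (Hbot Y) a.
Proof.
  apply le_div. exact I. split.
  - intros t p. exfalso; exact (inI_empty t p).
  - intros t p. exfalso; exact (inI_empty t p).
Qed.

Definition cc {Y} (d : nnR) (e : dom (IOp (EFin d)) -> S) (b : H S Y) : H S Y :=
  match b with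
  | HTerm d2 e2 y => HTerm (nnadd d d2) (concat_fun d e (IOp (EFin d2)) e2) y
  | HDiv J e2 => HDiv (shiftI d J) (concat_fun d e J e2)
  end.

Lemma bind_term X Y (f : X -> H S Y) d e x : H_bind S X Y f (HTerm d e x) = cc d e (f x).
Proof. simpl. destruct (f x); reflexivity. Qed.

Lemma bind_div X Y (f : X -> H S Y) (a : H S X) :
  isdiv a -> isdiv (H_bind S X Y f a) /\ Idom (H_bind S X Y f a) = Idom a.
Proof. destruct a; simpl; tauto. Qed.

Lemma Idom_cc Y d e (b : H S Y) : Idom (cc d e b) = shiftI d (Idom b).
Proof. destruct b; reflexivity. Qed.

Lemma isdiv_cc Y d e (b : H S Y) : isdiv (cc d e b) <-> isdiv b.
Proof. destruct b; simpl; tauto. Qed.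

Lemma cc_mono Y d e (b b' : H S Y) : H_le S Y b b' -> H_le S Y (cc d e b) (cc d e b').
Proof.
  rewrite le_iff. intros [->|[D P]]. apply Hle_refl.
  destruct b as [|J e2]; [contradiction|]. apply le_div. exact I.
  destruct b' as [d2 e2' y|J' e2']; unfold pre in *; simpl in *;
    apply (prefix_concat d e J e2 _ _ P).
Qed.

Lemma cc_base Y d e (b : H S Y) : prefix (IOp (EFin d)) e (Idom (cc d e b)) (Ival (cc d e b)).
Proof. destruct b as [d2 e2 y|J e2]; simpl; apply (prefix_concat_base d e _ e2). Qed.

Lemma Hm1 X (a : H S X) : H_bind S X X (H_eta S X) a = a.
Proof.
  destruct a as [d e x|I e]; [|reflexivity]. simpl.
  apply HTerm_eq. simpl; lra. concat_solve.
Qed.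

Lemma Hm2 X Y (f : X -> H S Y) (x : X) : H_bind S X Y f (H_eta S X x) = f x.
Proof.
  simpl. destruct (f x) as [d2 e2 y|J e2].
  - apply HTerm_eq. simpl; lra. concat_solve.
  - apply HDiv_eq.
    + intros t. rewrite inI_shift. simpl. rewrite Rminus_0_r.
      split. intros [H0 [H1|H1]]; [exfalso; lra| exact H1].
      intros Ht; split; [eapply inI_ge0; eauto| auto].
    + concat_solve.
Qed.

Lemma Hm3 X Y Z (f : X -> H S Y) (g : Y -> H S Z) (a : H S X) :
  H_bind S X Z (fun x => H_bind S Y Z g (f x)) a = H_bind S Y Z g (H_bind S X Y f a).
Proof.
  destruct a as [d e x|I e]; [|reflexivity]. simpl.
  destruct (f x) as [d2 e2 y|J e2]; simpl; [|reflexivity].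
  destruct (g y) as [d3 e3 z|K e3]; simpl.
  - apply HTerm_eq. simpl; lra. concat_solve.
  - apply HDiv_eq.
    + intros t. rewrite !inI_shift. simpl.
      replace (t - (d + d2)) with (t - d - d2) by ring. addnn. split.
      * intros [h0 [h1|[h1 [h2|h2]]]]; (split; [exact h0|]); [left; lra | left; lra | right; auto].
      * intros [h0 [h1|h1]].
        -- destruct (Rlt_dec t d); [split; auto; left; auto|].
           split; auto; right; split; [lra| left; lra].
        -- pose proof (inI_ge0 _ _ h1). split; auto; right; split; [lra|right; auto].
    + concat_solve.
Qed.

Notation lubH := (slub (H S) (H_le S)).
Notation chainH := (schain (H S) (H_le S)).

Lemma lubH_uniq Y (c : nat -> H S Y) s s' : lubH c s -> lubH c s' -> s = s'.
Proof. intros [H1 H2] [H3 H4]. apply Hle_anti; auto. Qed.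

Lemma chain_le Y (c : nat -> H S Y) : chainH c -> forall n m, (n <= m)%nat -> H_le S Y (c n) (c m).
Proof.
  intros Hc n m Hnm. induction Hnm. apply Hle_refl. eapply Hle_trans; [exact IHHnm| apply Hc].
Qed.

Lemma chain_term Y (c : nat -> H S Y) n : chainH c -> ~ isdiv (c n) ->
  forall m, (n <= m)%nat -> c m = c n.
Proof.
  intros Hc N m Hm. induction Hm; auto.
  symmetry. rewrite <- IHHm. apply term_max. rewrite IHHm; auto. rewrite IHHm. rewrite <- IHHm. apply Hc.
Qed.

Lemma lub_attained Y (c : nat -> H S Y) n : (forall m, H_le S Y (c m) (c n)) -> lubH c (c n).
Proof. intros Hm. split; auto. Qed.

Lemma caseA Y (c : nat -> H S Y) n : chainH c -> ~ isdiv (c n) -> lubH c (c n).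
Proof.
  intros Hc N. apply lub_attained. intros m. destruct (Nat.le_ge_cases m n).
  - apply chain_le; auto.
  - rewrite (chain_term Y c n Hc N m); auto. apply Hle_refl.
Qed.

Lemma cover_lub Y (c : nat -> H S Y) x : isdiv x -> (forall n, H_le S Y (c n) x) ->
  (forall t, inI (Idom x) t -> exists n, isdiv (c n) /\ inI (Idom (c n)) t) -> lubH c x.
Proof.
  intros Dx Up Cov. split; auto. intros h Hh. apply le_div; auto. split.
  - intros t Ht. destruct (Cov t Ht) as [n [Dn Hn]].
    apply (proj1 (proj1 (le_div _ _ _ Dn) (Hh n))). auto.
  - intros t p p'. destruct (Cov t p) as [n [Dn q]].
    rewrite <- (proj2 (proj1 (le_div _ _ _ Dn) (Up n)) t q p).
    apply (proj2 (proj1 (le_div _ _ _ Dn) (Hh n))).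
Qed.

Lemma chain_agree Y (c : nat -> H S Y) : chainH c -> (forall n, isdiv (c n)) ->
  forall n m t p q, Ival (c n) (exist _ t p) = Ival (c m) (exist _ t q).
Proof.
  intros Hc D n m t p q. destruct (Nat.le_ge_cases n m) as [h|h].
  - apply (proj2 (proj1 (le_div _ _ _ (D n)) (chain_le Y c Hc _ _ h))).
  - symmetry. apply (proj2 (proj1 (le_div _ _ _ (D m)) (chain_le Y c Hc _ _ h))).
Qed.

End HS.

Lemma lub_gap (P : R -> Prop) m t : is_lub P m -> t < m -> exists s, P s /\ t < s.
Proof.
  intros [Ub Lst] Ht. apply NNPP. intros N.
  assert (is_upper_bound P t).
  { intros s Ps. destruct (Rle_lt_dec s t); auto. exfalso; apply N; eauto. }
  specialize (Lst t H). lra.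
Qed.

Lemma downset (P : R -> Prop) : (forall t, P t -> 0 <= t) ->
  (forall s t, P t -> 0 <= s <= t -> P s) -> exists I, forall t, inI I t <-> P t.
Proof.
  intros G0 Dn. destruct (classic (exists t, P t)) as [ne|emp].
  - destruct (classic (bound P)) as [Hb|Hnb].
    + destruct (completeness P Hb ne) as [m Hm].
      assert (m0 : 0 <= m).
      { destruct ne as [t Pt]. pose proof (G0 t Pt). pose proof (proj1 Hm t Pt). lra. }
      destruct (classic (P m)) as [Pm|NPm].
      * exists (ICl (mknn m m0)). intros t; simpl. split.
        -- intros [h1 h2]. destruct (Req_dec t m) as [->|hne]; auto.
           destruct (lub_gap P m t Hm ltac:(lra)) as [s [Ps hs]]. apply (Dn t s); auto; lra.
        -- intros Pt. split; [apply G0; auto| apply (proj1 Hm); auto].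
      * exists (IOp (EFin (mknn m m0))). intros t; simpl. split.
        -- intros [h1 h2].
           destruct (lub_gap P m t Hm ltac:(lra)) as [s [Ps hs]]. apply (Dn t s); auto; lra.
        -- intros Pt. split; [apply G0; auto|]. pose proof (proj1 Hm t Pt).
           destruct (Req_dec t m); [subst; contradiction| lra].
    + exists (IOp EInf). intros t; simpl. split.
      * intros h. apply NNPP; intros N. apply Hnb. exists t. intros s Ps.
        destruct (Rle_lt_dec s t); auto. exfalso. apply N. apply (Dn t s); auto; lra.
      * apply G0.
  - exists (IOp (EFin nn0)). intros t; simpl. split; [lra|]. intros Pt; exfalso; eauto.
Qed.

Section HS2.
Variable S : Type.
Notation lubH := (slub (H S) (H_le S)).
Notation chainH := (schain (H S) (H_le S)).

Lemma caseB Y (c : nat -> H S Y) : chainH c -> (forall n, isdiv S (c n)) ->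
  exists u, isdiv S u /\ lubH c u /\ (forall t, inI (Idom S u) t <-> exists n, inI (Idom S (c n)) t).
Proof.
  intros Hc D.
  destruct (downset (fun t => exists n, inI (Idom S (c n)) t)) as [U HU].
  { intros t [n h]. eapply inI_ge0; eauto. }
  { intros s t [n h] hs. exists n. eapply inI_down; eauto. }
  set (E := fun (p : dom U) =>
     let w := constructive_indefinite_description _ (proj1 (HU (proj1_sig p)) (proj2_sig p)) in
     Ival S (c (proj1_sig w)) (exist _ (proj1_sig p) (proj2_sig w))).
  assert (Up : forall n, H_le S Y (c n) (HDiv U E)).
  { intros n. apply le_div; auto. split.
    - intros t Ht. simpl. apply HU. eauto.
    - intros t p p'. simpl. unfold E. simpl.
      destruct (constructive_indefinite_description _ _) as [m q]. simpl.
      apply chain_agree; auto. }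
  exists (HDiv U E). split; [exact I|]. split.
  - apply cover_lub; auto. exact I. intros t Ht. simpl in Ht.
    destruct (proj1 (HU t) Ht) as [n Hn]. eauto.
  - simpl. apply HU.
Qed.

Lemma Hlub_ex Y (c : nat -> H S Y) : chainH c -> exists s, lubH c s.
Proof.
  intros Hc. destruct (classic (exists n, ~ isdiv S (c n))) as [[n N]|N].
  - exists (c n). apply caseA; auto.
  - destruct (caseB Y c) as [u [_ [L _]]]; eauto.
    intros n. apply NNPP. intros h. apply N; eauto.
Qed.

Lemma lub_cases Y (c : nat -> H S Y) s : chainH c -> lubH c s ->
  (exists n, ~ isdiv S (c n) /\ s = c n /\ forall m, (n <= m)%nat -> c m = c n) \/
  ((forall n, isdiv S (c n)) /\ isdiv S s /\
     (forall t, inI (Idom S s) t <-> exists n, inI (Idom S (c n)) t)).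
Proof.
  intros Hc L. destruct (classic (exists n, ~ isdiv S (c n))) as [[n N]|N].
  - left. exists n. split; auto. split.
    + eapply lubH_uniq; eauto. apply caseA; auto.
    + apply chain_term; auto.
  - assert (D : forall n, isdiv S (c n)).
    { intros n. apply NNPP. intros h. apply N; eauto. }
    right. destruct (caseB Y c Hc D) as [u [Du [Lu Cu]]].
    rewrite (lubH_uniq _ Y c s u); auto.
Qed.

Lemma lub_ext Y (c c' : nat -> H S Y) s : (forall n, c n = c' n) -> lubH c s -> lubH c' s.
Proof.
  intros E [A B]. split. intros n; rewrite <- E; auto. intros h Hh. apply B. intros n; rewrite E; auto.
Qed.

Lemma Hbind_mono_r X Y (f : X -> H S Y) a a' : H_le S X a a' ->
  H_le S Y (H_bind S X Y f a) (H_bind S X Y f a').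
Proof.
  rewrite le_iff. intros [->|[D P]]. apply Hle_refl.
  destruct a as [|I0 e]; [contradiction|]. change (H_le S Y (HDiv I0 e) (H_bind S X Y f a')).
  apply le_div. exact I.
  destruct a' as [d e' x|I' e'].
  - rewrite bind_term. eapply prefix_trans; [exact P|]. apply cc_base.
  - exact P.
Qed.

Lemma Hbind_mono_l X Y (f f' : X -> H S Y) a : (forall x, H_le S Y (f x) (f' x)) ->
  H_le S Y (H_bind S X Y f a) (H_bind S X Y f' a).
Proof.
  intros Hf. destruct a as [d e x|I0 e].
  - rewrite !bind_term. apply cc_mono; auto.
  - apply Hle_refl.
Qed.

Lemma Hbind_cont_r X Y (f : X -> H S Y) (c : nat -> H S X) s :
  chainH c -> lubH c s -> lubH (fun n => H_bind S X Y f (c n)) (H_bind S X Y f s).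
Proof.
  intros Hc L. destruct (lub_cases X c s Hc L) as [[n [N [-> Ev]]]|[D [Ds Cs]]].
  - apply (lub_attained S Y (fun n => H_bind S X Y f (c n)) n). intros m.
    destruct (Nat.le_ge_cases m n).
    + apply Hbind_mono_r. apply chain_le; auto.
    + rewrite Ev; auto. apply Hle_refl.
  - destruct (bind_div S X Y f s Ds) as [Ds' Es].
    apply cover_lub; auto.
    + intros n. apply Hbind_mono_r, L.
    + intros t. rewrite Es, Cs. intros [n Hn]. exists n.
      destruct (bind_div S X Y f (c n) (D n)) as [D' E']. rewrite E'. auto.
Qed.

Lemma cc_cont Y d e (b : nat -> H S Y) s : chainH b -> lubH b s ->
  lubH (fun n => cc S d e (b n)) (cc S d e s).
Proof.
  intros Hc L. destruct (lub_cases Y b s Hc L) as [[n [N [-> Ev]]]|[D [Ds Cs]]].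
  - apply (lub_attained S Y (fun n => cc S d e (b n)) n). intros m.
    destruct (Nat.le_ge_cases m n).
    + apply cc_mono. apply chain_le; auto.
    + rewrite Ev; auto. apply Hle_refl.
  - apply cover_lub.
    + apply isdiv_cc; auto.
    + intros n. apply cc_mono, L.
    + intros t. rewrite Idom_cc, inI_shift. intros [h0 [h1|h1]].
      * exists O. split. apply isdiv_cc; auto. rewrite Idom_cc, inI_shift. auto.
      * destruct (proj1 (Cs _) h1) as [n Hn]. exists n. split. apply isdiv_cc; auto.
        rewrite Idom_cc, inI_shift. auto.
Qed.

Lemma Hbind_cont_l X Y (k : nat -> X -> H S Y) (K : X -> H S Y) a :
  (forall x, chainH (fun n => k n x)) -> (forall x, lubH (fun n => k n x) (K x)) ->
  lubH (fun n => H_bind S X Y (k n) a) (H_bind S X Y K a).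
Proof.
  intros Hc L. destruct a as [d e x|I0 e].
  - rewrite bind_term. eapply lub_ext; [intros n; symmetry; apply bind_term|].
    apply cc_cont; auto.
  - simpl. split. intros; apply Hle_refl. intros h Hh; apply (Hh O).
Qed.

Theorem H_elgot : elgot_by_least_fixpoints (H S) (H_eta S) (H_bind S) (H_le S).
Proof.
  apply (abstract_elgot (H S) (H_eta S) (H_bind S) (H_le S)
    (Hm1 S) (Hm2 S) (Hm3 S) (Hle_refl S) (Hle_trans S) (Hle_anti S)
    (Hbot S) (Hbot_le S) (fun X Y f => eq_refl) Hlub_ex
    Hbind_mono_l Hbind_cont_r Hbind_cont_l).
Qed.
End HS2.

Section HPS.
Variable S : Type.
Notation lubH := (slub (H S) (H_le S)).
Notation chainH := (schain (H S) (H_le S)).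
Notation lubP := (slub (Hp S) (Hp_le S)).
Notation chainP := (schain (Hp S) (Hp_le S)).

Definition iota {X} (a : Hp S X) : H S X :=
  match a with HpTerm d e x => HTerm d e x | HpDiv k e => HDiv (IOp k) e end.
Definition rho {X} (a : H S X) : Hp S X :=
  match a with
  | HTerm d e x => HpTerm d e x
  | HDiv (IOp k) e => HpDiv k e
  | HDiv (ICl _) _ => HpDiv (EFin nn0) empty_fun
  end.

Lemma rho_iota X (a : Hp S X) : rho (iota a) = a.
Proof. destruct a; reflexivity. Qed.

Lemma iota_inj X (a b : Hp S X) : iota a = iota b -> a = b.
Proof. intros E. rewrite <- (rho_iota X a), <- (rho_iota X b), E. reflexivity. Qed.

Lemma iota_bind X Y (f : X -> Hp S Y) a :
  iota (Hp_bind S X Y f a) = H_bind S X Y (fun x => iota (f x)) (iota a).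
Proof. destruct a; simpl; [destruct (f x)|]; reflexivity. Qed.

Lemma iota_le Y (a b : Hp S Y) : Hp_le S Y a b <-> H_le S Y (iota a) (iota b).
Proof.
  unfold Hp_le, H_le. split.
  - intros [E|P]. left; subst; auto. right. destruct a, b; simpl in *; auto.
  - intros [E|P]. left; apply iota_inj; auto. right. destruct a, b; simpl in *; auto.
Qed.

Lemma Pm1 X (a : Hp S X) : Hp_bind S X X (Hp_eta S X) a = a.
Proof. apply iota_inj. rewrite iota_bind. exact (Hm1 S X (iota a)). Qed.

Lemma Pm2 X Y (f : X -> Hp S Y) (x : X) : Hp_bind S X Y f (Hp_eta S X x) = f x.
Proof. apply iota_inj. rewrite iota_bind. exact (Hm2 S X Y (fun x => iota (f x)) x). Qed.

Lemma Pm3 X Y Z (f : X -> Hp S Y) (g : Y -> Hp S Z) (a : Hp S X) :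
  Hp_bind S X Z (fun x => Hp_bind S Y Z g (f x)) a = Hp_bind S Y Z g (Hp_bind S X Y f a).
Proof.
  apply iota_inj. rewrite !iota_bind.
  rewrite <- Hm3. f_equal. apply functional_extensionality. intros x. apply iota_bind.
Qed.

Lemma Ple_refl Y (a : Hp S Y) : Hp_le S Y a a.
Proof. left; auto. Qed.

Lemma Ple_trans Y (a b c : Hp S Y) : Hp_le S Y a b -> Hp_le S Y b c -> Hp_le S Y a c.
Proof. rewrite !iota_le. apply Hle_trans. Qed.

Lemma Ple_anti Y (a b : Hp S Y) : Hp_le S Y a b -> Hp_le S Y b a -> a = b.
Proof. rewrite !iota_le. intros A B. apply iota_inj. apply Hle_anti; auto. Qed.

Definition Pbot Y : Hp S Y := HpDiv (EFin nn0) empty_fun.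

Lemma Pbot_le Y (a : Hp S Y) : Hp_le S Y (Pbot Y) a.
Proof. rewrite iota_le. apply (Hbot_le S). Qed.

Lemma chain_iota Y (c : nat -> Hp S Y) : chainP c -> chainH (fun n => iota (c n)).
Proof. intros Hc n. apply iota_le, Hc. Qed.

Lemma L1 Y (c : nat -> Hp S Y) s : lubH (fun n => iota (c n)) (iota s) -> lubP c s.
Proof.
  intros [A B]. split.
  - intros n; apply iota_le, A.
  - intros h Hh. apply iota_le, B. intros n; apply iota_le, Hh.
Qed.

Lemma Idom_iota Y (a : Hp S Y) : exists k, Idom S (iota a) = IOp k.
Proof. destruct a; simpl; eauto. Qed.

Lemma open_gap k d : inI (IOp k) d -> exists t, d < t /\ inI (IOp k) t.
Proof.
  destruct k as [[d' h']|]; simpl; intros Hd.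
  - exists ((d + d') / 2). lra.
  - exists (d + 1). lra.
Qed.

Lemma L2 Y (c : nat -> Hp S Y) s : chainP c -> lubH (fun n => iota (c n)) s -> s = iota (rho s).
Proof.
  intros Hc L. destruct (lub_cases S Y _ s (chain_iota Y c Hc) L) as [[n [_ [-> _]]]|[D [Ds Cs]]].
  - rewrite rho_iota. reflexivity.
  - destruct s as [|I0 e]; [contradiction|]. destruct I0 as [d|k]; [|reflexivity].
    exfalso. simpl in Cs. destruct (proj1 (Cs d)) as [n Hn].
    { pose proof (nnval_ge0 d). lra. }
    destruct (Idom_iota Y (c n)) as [k Ek]. rewrite Ek in Hn.
    destruct (open_gap k d Hn) as [t [ht Ht]].
    assert (Q : 0 <= t <= d). { apply Cs. exists n. rewrite Ek. exact Ht. }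
    lra.
Qed.

Lemma Plub_ex Y (c : nat -> Hp S Y) : chainP c -> exists s, lubP c s.
Proof.
  intros Hc. destruct (Hlub_ex S Y _ (chain_iota Y c Hc)) as [s L].
  exists (rho s). apply L1. rewrite <- (L2 Y c s Hc L). exact L.
Qed.

Lemma L3 Y (c : nat -> Hp S Y) s : chainP c -> lubP c s -> lubH (fun n => iota (c n)) (iota s).
Proof.
  intros Hc L. destruct (Hlub_ex S Y _ (chain_iota Y c Hc)) as [s' L'].
  pose proof (L2 Y c s' Hc L') as E.
  assert (Ls : lubP c (rho s')). { apply L1. rewrite <- E. exact L'. }
  assert (rho s' = s).
  { destruct Ls as [A B], L as [C D]. apply Ple_anti; auto. }
  subst s. rewrite <- E. exact L'.
Qed.

Lemma Pbind_mono_l X Y (f f' : X -> Hp S Y) a : (forall x, Hp_le S Y (f x) (f' x)) ->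
  Hp_le S Y (Hp_bind S X Y f a) (Hp_bind S X Y f' a).
Proof.
  intros Hf. rewrite iota_le, !iota_bind. apply Hbind_mono_l. intros x; apply iota_le, Hf.
Qed.

Lemma Pbind_cont_r X Y (f : X -> Hp S Y) (c : nat -> Hp S X) s :
  chainP c -> lubP c s -> lubP (fun n => Hp_bind S X Y f (c n)) (Hp_bind S X Y f s).
Proof.
  intros Hc L. apply L1. rewrite iota_bind.
  eapply lub_ext; [intros n; symmetry; apply iota_bind|].
  apply Hbind_cont_r. apply chain_iota; auto. apply L3; auto.
Qed.

Lemma Pbind_cont_l X Y (k : nat -> X -> Hp S Y) (K : X -> Hp S Y) a :
  (forall x, chainP (fun n => k n x)) -> (forall x, lubP (fun n => k n x) (K x)) ->
  lubP (fun n => Hp_bind S X Y (k n) a) (Hp_bind S X Y K a).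
Proof.
  intros Hc L. apply L1. rewrite iota_bind.
  eapply lub_ext; [intros n; symmetry; apply iota_bind|].
  apply (Hbind_cont_l S X Y (fun n x => iota (k n x)) (fun x => iota (K x))).
  - intros x. apply (chain_iota Y (fun n => k n x)); auto.
  - intros x. apply (L3 Y (fun n => k n x)); auto.
Qed.

Theorem Hp_elgot : elgot_by_least_fixpoints (Hp S) (Hp_eta S) (Hp_bind S) (Hp_le S).
Proof.
  apply (abstract_elgot (Hp S) (Hp_eta S) (Hp_bind S) (Hp_le S)
    Pm1 Pm2 Pm3 Ple_refl Ple_trans Ple_anti
    Pbot Pbot_le (fun X Y f => eq_refl) Plub_ex
    Pbind_mono_l Pbind_cont_r Pbind_cont_l).
Qed.
End HPS.

Theorem theorem2 (S : Type) :
  elgot_by_least_fixpoints (Hp S) (Hp_eta S) (Hp_bind S) (Hp_le S) /\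
  elgot_by_least_fixpoints (H S) (H_eta S) (H_bind S) (H_le S).
Proof. split; [apply Hp_elgot| apply H_elgot]. Qed.
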